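(* Let $m\ge2$ be even, $l\ge1$, and $V$ a finite-dimensional $\mathbb{K}$-vector space with ordered basis $(e_i)_{i\in B}$. Then $\mathrm{HPf}^{(m,l)}(V)\subseteq\mathrm{HPf}^{(m,l+1)}(V)$.
   Context: For $x\in\bigwedge^mV$ write $x=\sum_Ix_Ie_I$, where $e_I=e_{i_1}\wedge\dots\wedge e_{i_m}$ for $I=\{i_1<\dots<i_m\}\subseteq B$. For $A\subseteq B$ with $|A|=mk$, the hyper-Pfaffian form is $\mathrm{hpf}^{(m,k)}_A(x)=\sum\mathrm{sgn}(I_1,\dots,I_k)x_{I_1}\cdots x_{I_k}$, summed over unordered partitions $A=I_1\sqcup\dots\sqcup I_k$ into $m$-sets, where $\mathrm{sgn}(I_1,\dots,I_k)$ is the sign of the permutation of $A$ whose one-line form lists $I_1,\dots,I_k$ successively, each in increasing order. $\mathrm{HPf}^{(m,k)}(V)=\{x\in\bigwedge^mV:\mathrm{hpf}^{(m,k)}_A(x)=0\ \forall A\subseteq B,|A|=mk\}$. *)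

(* Defs.v *)
From HB Require Import structures.
From mathcomp Require Import all_boot all_order all_algebra.
Set Implicit Arguments. Unset Strict Implicit. Unset Printing Implicit Defensive.
Import GRing.Theory.
Local Open Scope ring_scope.

(* The ordered basis is (e_i)_{i in 'I_n}, ordered by the natural order on 'I_n.
   An element x of /\^m V is given by its coordinates x_I, I an m-subset of 'I_n;
   we represent it as x : {ffun {set 'I_n} -> K}; only the values x I with
   #|I| = m are ever used. *)

Section HPf.
Variables (K : fieldType) (n : nat).

Definition sorted_block (I : {set 'I_n}) : seq nat :=
  sort leq [seq val i | i in I].

Definition block_key (I : {set 'I_n}) : nat := head 0%N (sorted_block I).

Definition blocks_seq (P : {set {set 'I_n}}) : seq {set 'I_n} :=
  sort (fun I J => (block_key I <= block_key J)%N) (enum P).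

Definition one_line (P : {set {set 'I_n}}) : seq nat :=
  flatten [seq sorted_block B | B <- blocks_seq P].

Definition ninv (s : seq nat) : nat :=
  (\sum_(i < size s) \sum_(j < size s | (i < j)%N)
      (nth 0%N s j < nth 0%N s i)%N)%N.

(* Sign of the permutation of A whose one-line form is one_line P. *)
Definition part_sgn (P : {set {set 'I_n}}) : K := (-1) ^+ ninv (one_line P).

Definition hpf (m : nat) (A : {set 'I_n}) (x : {ffun {set 'I_n} -> K}) : K :=
  \sum_(P : {set {set 'I_n}} | partition P A && [forall I in P, #|I| == m])
     part_sgn P * \prod_(I in P) x I.

Definition HPf (m k : nat) (x : {ffun {set 'I_n} -> K}) : Prop :=
  forall A : {set 'I_n}, #|A| = (m * k)%N -> hpf m A x = 0.

End HPf.

(* Main.v *)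
Require Import Defs.
From mathcomp Require Import all_boot all_order all_algebra.
From mathcomp Require Import zify ring.
Set Implicit Arguments. Unset Strict Implicit. Unset Printing Implicit Defensive.

Fixpoint ninvr (s : seq nat) : nat :=
  match s with [::] => 0%N | a :: t => (count (fun b => b < a) t + ninvr t)%N end.

Lemma sum_count_nth (s : seq nat) a :
  (\sum_(j < size s) (nth 0%N s j < a))%N = count (fun b => b < a) s.
Proof.
elim: s => [|b s IH]; first by rewrite big_ord0.
by rewrite /= big_ord_recl /= IH.
Qed.

Lemma ninvE s : ninv s = ninvr s.
Proof.
elim: s => [|a s IH]; first by rewrite /ninv big_ord0.
rewrite /ninv /= big_ord_recl /= -IH /ninv; congr (_ + _)%N.
  rewrite big_mkcond big_ord_recl /= add0n -sum_count_nth.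
  by apply: eq_bigr => j _.
apply: eq_bigr => i _.
rewrite big_mkcond big_ord_recl /= add0n [RHS]big_mkcond.
by apply: eq_bigr => j _.
Qed.

Definition cross (s t : seq nat) : nat := sumn [seq count (fun b => b < a) t | a <- s].

Lemma ninv_cat s t : ninvr (s ++ t) = (ninvr s + ninvr t + cross s t)%N.
Proof.
elim: s => [|a s IH] /=; first by rewrite /cross /= addn0.
rewrite IH /cross /= count_cat; lia.
Qed.

Lemma cross_perm s t t' : perm_eq t t' -> cross s t = cross s t'.
Proof. by move=> /permP H; rewrite /cross; congr sumn; apply: eq_map => a; rewrite H. Qed.

Section S.
Variable n : nat.
Implicit Types (I J : {set 'I_n}).

Lemma mem_sorted_block J k : (k \in sorted_block J) = [exists i in J, val i == k].
Proof.
rewrite /sorted_block mem_sort; apply/mapP/existsP => [[i]|[i /andP[iJ /eqP <-]]].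
  by rewrite mem_enum => iJ ->; exists i; rewrite iJ eqxx.
by exists i; rewrite ?mem_enum.
Qed.

Lemma key_mem J : J != set0 -> exists2 i, i \in J & block_key J = val i.
Proof.
case/set0Pn => i0 i0J.
have : block_key J \in sorted_block J.
  rewrite /block_key; case E: (sorted_block J) => [|h t] /=; last by rewrite inE eqxx.
  have : (val i0 \in sorted_block J) by rewrite mem_sorted_block; apply/existsP; exists i0; rewrite i0J eqxx.
  by rewrite E.
by rewrite mem_sorted_block => /existsP[i /andP[iJ /eqP <-]]; exists i.
Qed.

Lemma key_min J i : i \in J -> (block_key J <= val i)%N.
Proof.
move=> iJ.
have : val i \in sorted_block J by rewrite mem_sorted_block; apply/existsP; exists i; rewrite iJ eqxx.
have : sorted leq (sorted_block J) by apply: sort_sorted; exact: leq_total.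
rewrite /block_key; case: (sorted_block J) => [|h t] //= srt.
rewrite inE => /orP[/eqP -> //|it].
have := order_path_min leq_trans srt => /allP /(_ _ it) //.
Qed.
End S.

Section S.
Variable n : nat.
Implicit Types (I J : {set 'I_n}) (P : {set {set 'I_n}}).

Lemma key_inj P J J' : trivIset P -> set0 \notin P -> J \in P -> J' \in P ->
  block_key J = block_key J' -> J = J'.
Proof.
move=> tP P0 JP J'P ek.
have ne : forall K, K \in P -> K != set0 by move=> K KP; apply: contraNneq P0 => <-.
have [i iJ ki] := key_mem (ne _ JP).
have [i' iJ' ki'] := key_mem (ne _ J'P).
have ii : i = i' by apply: val_inj; rewrite -ki -ki'.
subst i'; apply/eqP; apply: contraT => neq.
have := (elimT trivIsetP tP) J J' JP J'P neq.
by move/disjointFr => /(_ _ iJ); rewrite iJ'.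
Qed.

Lemma blocks_seqU1 I P : trivIset (I |: P) -> set0 \notin (I |: P) -> I \notin P ->
  (forall J, J \in P -> block_key I < block_key J)%N ->
  blocks_seq (I |: P) = I :: blocks_seq P.
Proof.
move=> tP P0 IP keyI.
pose leT := fun I J : {set 'I_n} => (block_key I <= block_key J)%N.
have tot : total leT by move=> a b; exact: leq_total.
have tr : transitive leT by move=> a b c; exact: leq_trans.
rewrite /blocks_seq.
transitivity (sort leT (I :: sort leT (enum P))).
  apply/perm_sort_inP.
  - by move=> a b _ _; exact: tot.
  - by move=> a b c _ _ _; exact: tr.
  - move=> a b; rewrite !mem_enum => aP bP /andP[h1 h2].
    by apply: (key_inj tP P0 aP bP); apply/eqP; rewrite eqn_leq h1 h2.
  apply: uniq_perm.
  - exact: enum_uniq.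
  - by rewrite /= sort_uniq enum_uniq mem_sort mem_enum IP.
  - by move=> J; rewrite inE mem_sort !mem_enum in_setU1.
apply: sorted_sort => //=.
rewrite path_min_sorted; first exact: sort_sorted.
by apply/allP => J; rewrite mem_sort mem_enum => /keyI /ltnW.
Qed.

Lemma one_lineU1 I P : trivIset (I |: P) -> set0 \notin (I |: P) -> I \notin P ->
  (forall J, J \in P -> block_key I < block_key J)%N ->
  one_line (I |: P) = sorted_block I ++ one_line P.
Proof. by move=> *; rewrite /one_line blocks_seqU1. Qed.
End S.

Section S.
Variable n : nat.
Implicit Types (I J : {set 'I_n}) (P : {set {set 'I_n}}).

Lemma uniq_flat P (L : seq {set 'I_n}) : trivIset P -> uniq L -> {subset L <= P} ->
  uniq (flatten [seq sorted_block J | J <- L]).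
Proof.
move=> tP; elim: L => [|J L IH] //= /andP[JL uL] sub.
rewrite cat_uniq IH ?andbT //; last by move=> K KL; apply: sub; rewrite inE KL orbT.
rewrite /sorted_block sort_uniq map_inj_uniq ?enum_uniq //=; last exact: val_inj.
apply/hasP => [[k /flattenP[s /mapP[J' J'L ->] kJ'] kJ]].
move: kJ kJ'; rewrite !mem_sorted_block => /existsP[i /andP[iJ /eqP ik]] /existsP[i' /andP[iJ' /eqP ik']].
have ii : i = i' by apply: val_inj; rewrite ik ik'.
subst i'.
have neq : J != J' by apply: contraNneq JL => ->.
have := (elimT trivIsetP tP) J J' (sub _ (mem_head _ _)) (sub J' ltac:(by rewrite inE J'L orbT)) neq.
by move/disjointFr => /(_ _ iJ); rewrite iJ'.
Qed.

Lemma one_line_perm P D : partition P D -> perm_eq (one_line P) [seq val i | i in D].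
Proof.
case/and3P => /eqP cov tP P0.
apply: uniq_perm.
- apply: (uniq_flat tP); first by rewrite /blocks_seq sort_uniq enum_uniq.
  by move=> J; rewrite /blocks_seq mem_sort mem_enum.
- by rewrite map_inj_uniq ?enum_uniq //; exact: val_inj.
move=> k; apply/flattenP/mapP.
- case=> s /mapP[J]; rewrite /blocks_seq mem_sort mem_enum => JP -> .
  rewrite mem_sorted_block => /existsP[i /andP[iJ /eqP ik]].
  exists i => //; rewrite mem_enum -cov; apply/bigcupP; by exists J.
- case=> i; rewrite mem_enum -cov => /bigcupP[J JP iJ] ->.
  exists (sorted_block J); first by apply/mapP; exists J; rewrite // /blocks_seq mem_sort mem_enum.
  by rewrite mem_sorted_block; apply/existsP; exists i; rewrite iJ eqxx.
Qed.
End S.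

Section S.
Variable n : nat.
Implicit Types (I J : {set 'I_n}) (P : {set {set 'I_n}}).

Lemma extend_facts (A : {set 'I_n}) I P' (a0 : 'I_n) : a0 \in I -> I \subset A ->
  partition P' (A :\: I) ->
  [/\ I \notin P', trivIset (I |: P'), set0 \notin (I |: P') & partition (I |: P') A].
Proof.
move=> a0I IA /and3P[/eqP cov tP P0].
have IP' : I \notin P'.
  apply/negP => IP.
  have : a0 \in A :\: I by rewrite -cov; apply/bigcupP; exists I.
  by rewrite inE a0I.
have disj : {in P', forall B : {set 'I_n}, [disjoint I & B]}.
  move=> J JP; rewrite -setI_eq0; apply/eqP/setP => i; rewrite !inE.
  apply/negbTE/andP => -[iI iJ].
  have : i \in A :\: I by rewrite -cov; apply/bigcupP; exists J.
  by rewrite inE iI.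
have [tU _] := trivIsetU1 disj tP P0.
have U0 : set0 \notin I |: P'.
  rewrite in_setU1 negb_or P0 andbT; apply/eqP => I0; rewrite -I0 in a0I.
  by rewrite inE in a0I.
split => //; rewrite /partition tU U0 andbT /cover bigcup_setU big_set1.
rewrite andbT -/(cover P') cov; apply/eqP; apply/setP => i; rewrite !inE.
by case iI: (i \in I) => //=; rewrite (subsetP IA).
Qed.
End S.

Import GRing.Theory.
Local Open Scope ring_scope.
Section S6.
Variables (K : fieldType) (n : nat).
Implicit Types (I J : {set 'I_n}) (P : {set {set 'I_n}}).

Definition eps (A I : {set 'I_n}) : K :=
  (-1) ^+ (ninvr (sorted_block I) + cross (sorted_block I) [seq val i | i in A :\: I])%N.

Lemma hpf_expand (m : nat) (A : {set 'I_n}) (a0 : 'I_n) (x : {ffun {set 'I_n} -> K}) :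
  a0 \in A -> (forall i, i \in A -> (val a0 <= val i)%N) ->
  hpf m A x = \sum_(I : {set 'I_n} | (a0 \in I) && (I \subset A) && (#|I| == m))
                 eps A I * x I * hpf m (A :\: I) x.
Proof.
move=> a0A a0min.
rewrite /hpf (partition_big (fun P => pblock P a0)
   (fun I => (a0 \in I) && (I \subset A) && (#|I| == m))); last first.
  move=> P /andP[/and3P[/eqP cov tP P0] /forallP sz].
  have a0c : a0 \in cover P by rewrite cov.
  rewrite mem_pblock a0c /=.
  have pbP := pblock_mem a0c.
  rewrite (implyP (sz _)) // andbT.
  apply/subsetP => i ip; rewrite -cov; apply/bigcupP; by exists (pblock P a0).
apply: eq_bigr => I /andP[/andP[a0I IA] /eqP cI].
rewrite (reindex_onto (fun P' => I |: P') (fun P => P :\ I)); last first.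
  move=> P /andP[/andP[/and3P[/eqP cov _ _] _] /eqP pb].
  apply: setD1K; rewrite -pb; apply: pblock_mem; by rewrite cov.
rewrite big_distrr /=.
have E : forall P', ((partition (I |: P') A && [forall J in I |: P', #|J| == m])
     && (pblock (I |: P') a0 == I) && ((I |: P') :\ I == P')) =
     (partition P' (A :\: I) && [forall J in P', #|J| == m]).
  move=> P'; apply/idP/idP.
  - move=> /andP[/andP[/andP[/and3P[/eqP cov tP P0] /forallP sz] /eqP pb] /eqP e].
    have IP' : I \notin P' by rewrite -e setD11.
    apply/andP; split; last first.
      apply/forallP => J; apply/implyP => JP.
      by apply: (implyP (sz J)); rewrite in_setU1 JP orbT.
    apply/and3P; split.
    + by have := coverD1 tP (setU11 I P'); rewrite e cov => ->.
    + by apply: trivIsetS tP; exact: subsetUr.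
    + by apply: contra P0 => h; rewrite in_setU1 h orbT.
  - move=> /andP[pP' /forallP sz].
    have [IP' tU U0 pU] := extend_facts a0I IA pP'.
    rewrite pU /= (def_pblock tU (setU11 I P') a0I) eqxx setU1K // eqxx !andbT.
    apply/forallP => J; apply/implyP; rewrite in_setU1 => /orP[/eqP -> | JP].
      by rewrite cI.
    exact: (implyP (sz J)).
apply: eq_big => [P' | P']; first exact: E.
rewrite E => /andP[pP' _].
have [IP' tU U0 pU] := extend_facts a0I IA pP'.
rewrite big_setU1 //= /part_sgn.
rewrite one_lineU1 //; last first.
  move=> J JP.
  have JA : J \subset A :\: I.
    case/and3P: pP' => /eqP cov _ _; rewrite -cov; apply/subsetP => i iJ.
    by apply/bigcupP; exists J.
  have Jne : J != set0 by apply: contraNneq U0 => <-; rewrite in_setU1 JP orbT.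
  have [j jJ ->] := key_mem Jne.
  apply: (leq_ltn_trans (key_min a0I)).
  have := subsetP JA j jJ; rewrite !inE => /andP[jI jA].
  rewrite ltn_neqAle a0min // andbT; apply/eqP => /val_inj e.
  by rewrite -e a0I in jI.
rewrite !ninvE ninv_cat (cross_perm _ (one_line_perm pP')) /eps !exprD.
move: ((-1) ^+ _) ((-1) ^+ _) ((-1) ^+ _) (x I) (\prod_(i in P') x i) => a b c d e.
ring.
Qed.
End S6.

Local Close Scope ring_scope.
Theorem lemma3p16 (K : fieldType) (n m l : nat) :
  (2 <= m)%N -> ~~ odd m -> (1 <= l)%N ->
  forall x : {ffun {set 'I_n} -> K}, HPf m l x -> HPf m l.+1 x.
Proof.
move=> m2 _ _ x H A cA.
have : (0 < #|A|)%N by rewrite cA muln_gt0 andbT; exact: ltnW.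
case/card_gt0P => i0 i0A.
case: (arg_minnP (fun i : 'I_n => val i) i0A) => a0 a0A amin.
rewrite (@hpf_expand K n m A a0 x a0A amin) big1 // => I /andP[/andP[_ IA] /eqP cI].
rewrite H ?GRing.mulr0 //.
rewrite cardsD (setIidPr IA) cI cA; lia.
Qed.
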